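(* Let $p_{ij}\ge0$ ($i,j\in\{1,2\}$) with $p_{11}+p_{12}\le1$, $p_{21}+p_{22}\le1$, let $\epsilon_1,\epsilon_2\ge0$, $c=(c_1,c_2)\in\mathbb{R}^2$, and $$P_1=\begin{pmatrix}p_{11}-\epsilon_1&p_{12}\\ p_{21}-\epsilon_2&p_{22}\end{pmatrix},\qquad P_2=\begin{pmatrix}p_{11}&p_{12}-\epsilon_1\\ p_{21}&p_{22}-\epsilon_2\end{pmatrix}.$$ Assume $\det(I-P_1)>0$ and $\det(I-P_2)>0$, and let $x=(I-P_1)^{-1}c$ and $y=(I-P_2)^{-1}c$. If $x_1\ge x_2$ and $y_2\ge y_1$, then $x=y$ and $x_1=x_2$ (so the common fixed point is a multiple of $(1,1)$). In particular, unless $x=y$ is a multiple of $(1,1)$, at most one of the conditions $x_1\ge x_2$ (the fixed point of $P_1$ lies in the region where $P_1$ is active) and $y_2\ge y_1$ (the fixed point of $P_2$ lies in the region where $P_2$ is active) holds.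
   Context: For a two-state fixed policy, the operator $x\mapsto c+\max\{\hat Px-\epsilon\max_{s}x_s,0\}$ acts as $x\mapsto c+P_1x$ on the region $x_1\ge x_2$ (when the maxima with $0$ are attained by the first argument), and as $x\mapsto c+P_2x$ on the region $x_2\ge x_1$; here $\hat P=(p_{ij})$. *)

(* Defs.v *)
From mathcomp Require Import all_boot all_order all_algebra.
Set Implicit Arguments. Unset Strict Implicit. Unset Printing Implicit Defensive.
Import Order.TTheory GRing.Theory Num.Theory.
Local Open Scope ring_scope.

Definition mx2 {R : pzRingType} (a b c d : R) : 'M[R]_2 :=
  \matrix_(i < 2, j < 2)
    if i == 0 then (if j == 0 then a else b) else (if j == 0 then c else d).

Definition cv2 {R : pzRingType} (a b : R) : 'cV[R]_2 :=
  \col_(i < 2) if i == 0 then a else b.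

(* Main.v *)
Require Import Defs.
From mathcomp Require Import all_boot all_order all_algebra.
From mathcomp Require Import ring lra.
Import Order.TTheory GRing.Theory Num.Theory.
Local Open Scope ring_scope.
Lemma det2 (R : comNzRingType) (A : 'M[R]_2) : \det A = A 0 0 * A 1 1 - A 0 1 * A 1 0.
Proof.
rewrite (expand_det_row _ 0) !big_ord_recl big_ord0 /cofactor !det_mx11 !mxE /=.
have e1 : lift 0 0 = 1 :> 'I_2 by apply/val_inj.
have e2 : lift ord0 ord0 = 1 :> 'I_2 by apply/val_inj.
have e3 : lift (lift ord0 ord0) 0 = 0 :> 'I_2 by apply/val_inj.
have e4 : lift ord0 0 = 1 :> 'I_2 by apply/val_inj.
have e5 : ord0 = 0 :> 'I_2 by apply/val_inj.
rewrite ?e1 ?e2 ?e3 ?e4 ?e5 /= expr0 expr1.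
have e6 : lift 1 0 = 0 :> 'I_2 by apply/val_inj.
rewrite e6; ring.
Qed.
(* u = x1-y1, v = x2-y2, m = x1-y2 ; a = x1-x2 >=0, b = y2-y1 >= 0 *)
Lemma core (R : realFieldType) (p11 p12 p21 p22 e1 e2 u v m : R) :
  0 <= p11 -> 0 <= p12 -> 0 <= p21 -> 0 <= p22 ->
  p11 + p12 <= 1 -> p21 + p22 <= 1 -> 0 <= e1 -> 0 <= e2 ->
  0 < (1 - p11 + e1) * (1 - p22) - p12 * (p21 - e2) ->
  0 < (1 - p11) * (1 - p22 + e2) - (p12 - e1) * p21 ->
  m <= u -> v <= m ->
  u * (1 - p11) - p12 * v + e1 * m = 0 ->
  v * (1 - p22) - p21 * u + e2 * m = 0 ->
  0 < m -> False.
Proof.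
move=> h11 h12 h21 h22 s1 s2 he1 he2 d1 d2 hu hv r1 r2 hm.
have k1 : 0 <= (u - m) * (1 - p11) by apply: mulr_ge0; lra.
have k2 : 0 <= m * (1 - p11 - p12) by apply: mulr_ge0; lra.
have k3 : 0 <= p12 * (m - v) by apply: mulr_ge0; lra.
have k4 : 0 <= e1 * m by apply: mulr_ge0; lra.
have z4 : e1 * m = 0 by nra.
have z2 : m * (1 - p11 - p12) = 0 by nra.
have z3 : p12 * (m - v) = 0 by nra.
have z1 : (u - m) * (1 - p11) = 0 by nra.
have E1 : e1 = 0.
  by move/eqP: z4; rewrite mulf_eq0 => /orP[/eqP//|/eqP]; lra.
have P : 1 - p11 - p12 = 0.
  by move/eqP: z2; rewrite mulf_eq0 => /orP[/eqP|/eqP//]; lra.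
have p12pos : 0 < p12.
  have : 0 < p12 * (1 - p22 + e2 - p21).
    have -> : p12 * (1 - p22 + e2 - p21) = (1 - p11) * (1 - p22 + e2) - (p12 - e1) * p21.
      rewrite E1; have -> : p12 = 1 - p11 by lra. ring.
    done.
  move=> hq0; rewrite lt0r h12 andbT; apply: contraTneq hq0 => ->; by rewrite mul0r ltxx.
have V : v = m.
  by move/eqP: z3; rewrite mulf_eq0 => /orP[/eqP|/eqP]; lra.
have U : u = m.
  by move/eqP: z1; rewrite mulf_eq0 => /orP[/eqP|/eqP]; lra.
have : 0 < 1 - p22 + e2 - p21.
  rewrite -(pmulr_rgt0 _ p12pos).
  have -> : p12 * (1 - p22 + e2 - p21) = (1 - p11) * (1 - p22 + e2) - (p12 - e1) * p21.
    rewrite E1; have -> : p12 = 1 - p11 by lra. ring.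
  done.
move=> hq.
have : m * (1 - p22 + e2 - p21) == 0.
  apply/eqP; rewrite -r2 U V; ring.
rewrite mulf_eq0 => /orP[/eqP|/eqP]; lra.
Qed.

Lemma sys (R : realFieldType) (a b c d c1 c2 : R) :
  0 < \det (1%:M - mx2 a b c d) ->
  let x := invmx (1%:M - mx2 a b c d) *m cv2 c1 c2 in
  (1 - a) * x 0 0 - b * x 1 0 = c1 /\ (1 - d) * x 1 0 - c * x 0 0 = c2
  /\ \det (1%:M - mx2 a b c d) = (1 - a) * (1 - d) - b * c.
Proof.
move=> hd x.
have hdet : \det (1%:M - mx2 a b c d) = (1 - a) * (1 - d) - b * c.
  by rewrite det2 !mxE /=; ring.
have hu : (1%:M - mx2 a b c d) \in unitmx.
  by rewrite unitmxE unitfE; apply: lt0r_neq0.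
have hx : (1%:M - mx2 a b c d) *m x = cv2 c1 c2 by rewrite /x mulmxA mulmxV // mul1mx.
clearbody x.
have h0 : ((1%:M - mx2 a b c d) *m x) 0 0 = cv2 c1 c2 0 0 by rewrite hx.
have h1 : ((1%:M - mx2 a b c d) *m x) 1 0 = cv2 c1 c2 1 0 by rewrite hx.
move: h0 h1; rewrite /= !mxE !big_ord_recl big_ord0 !mxE /=.
have e1 : lift ord0 ord0 = 1 :> 'I_2 by apply/val_inj.
have e5 : ord0 = 0 :> 'I_2 by apply/val_inj.
move=> h0 h1.
rewrite ?e1 ?e5 /= ?big_ord0 in h0 h1.
 split; [|split] => //.
- rewrite -h0; ring.
- rewrite -h1; ring.
Qed.

Theorem mainTheorem8 (R : realFieldType)
  (p11 p12 p21 p22 e1 e2 c1 c2 : R) :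
  0 <= p11 -> 0 <= p12 -> 0 <= p21 -> 0 <= p22 ->
  p11 + p12 <= 1 -> p21 + p22 <= 1 ->
  0 <= e1 -> 0 <= e2 ->
  let P1 := mx2 (p11 - e1) p12 (p21 - e2) p22 in
  let P2 := mx2 p11 (p12 - e1) p21 (p22 - e2) in
  let c := cv2 c1 c2 in
  0 < \det (1%:M - P1) -> 0 < \det (1%:M - P2) ->
  let x := invmx (1%:M - P1) *m c in
  let y := invmx (1%:M - P2) *m c in
  x 1 0 <= x 0 0 -> y 0 0 <= y 1 0 ->
  x = y /\ x 0 0 = x 1 0.
Proof.
move=> h11 h12 h21 h22 s1 s2 he1 he2 P1 P2 c d1 d2 x y hx hy.
have [Ex1 [Ex2 D1]] := @sys R _ _ _ _ c1 c2 d1.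
have [Ey1 [Ey2 D2]] := @sys R _ _ _ _ c1 c2 d2.
rewrite -/x in Ex1 Ex2; rewrite -/y in Ey1 Ey2.
rewrite D1 in d1; rewrite D2 in d2.
clearbody x y.
set X1 := x 0 0 in hx Ex1 Ex2 *; set X2 := x 1 0 in hx Ex1 Ex2 *.
set Y1 := y 0 0 in hy Ey1 Ey2 *; set Y2 := y 1 0 in hy Ey1 Ey2 *.
have r1 : (X1 - Y1) * (1 - p11) - p12 * (X2 - Y2) + e1 * (X1 - Y2) = 0.
  transitivity (((1 - (p11 - e1)) * X1 - p12 * X2) - ((1 - p11) * Y1 - (p12 - e1) * Y2)); first ring.
  by rewrite Ex1 Ey1 subrr.
have r2 : (X2 - Y2) * (1 - p22) - p21 * (X1 - Y1) + e2 * (X1 - Y2) = 0.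
  transitivity (((1 - p22) * X2 - (p21 - e2) * X1) - ((1 - (p22 - e2)) * Y2 - p21 * Y1)); first ring.
  by rewrite Ex2 Ey2 subrr.
have d1' : 0 < (1 - p11 + e1) * (1 - p22) - p12 * (p21 - e2).
  by rewrite (_ : (1 - p11 + e1) * (1 - p22) - p12 * (p21 - e2) = (1 - (p11 - e1)) * (1 - p22) - p12 * (p21 - e2)) //; ring.
have d2' : 0 < (1 - p11) * (1 - p22 + e2) - (p12 - e1) * p21.
  by rewrite (_ : (1 - p11) * (1 - p22 + e2) - (p12 - e1) * p21 = (1 - p11) * (1 - (p22 - e2)) - (p12 - e1) * p21) //; ring.
have [mlt|mgt|meq] := ltgtP (X1 - Y2) 0.
- exfalso.
  apply: (@core R p22 p21 p12 p11 e2 e1 (Y2 - X2) (Y1 - X1) (Y2 - X1)) => //;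
    try lra.
- exfalso.
  apply: (@core R p11 p12 p21 p22 e1 e2 (X1 - Y1) (X2 - Y2) (X1 - Y2)) => //; lra.
- have r1' : (X1 - Y1) * (1 - p11) - p12 * (X2 - Y2) = 0 by rewrite meq mulr0 addr0 in r1.
  have r2' : (X2 - Y2) * (1 - p22) - p21 * (X1 - Y1) = 0 by rewrite meq mulr0 addr0 in r2.
  have k1 : 0 <= (X1 - Y1) * (1 - p11) by apply: mulr_ge0; lra.
  have k2 : 0 <= p12 * (Y2 - X2) by apply: mulr_ge0; lra.
  have k3 : 0 <= (Y2 - X2) * (1 - p22) by apply: mulr_ge0; lra.
  have k4 : 0 <= p21 * (X1 - Y1) by apply: mulr_ge0; lra.
  have U : X1 - Y1 = 0.
    have z1 : (X1 - Y1) * (1 - p11) = 0 by nra.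
    have z2 : p21 * (X1 - Y1) = 0 by nra.
    move/eqP: z1; rewrite mulf_eq0 => /orP[/eqP//|/eqP z1].
    move/eqP: z2; rewrite mulf_eq0 => /orP[/eqP z2|/eqP//].
    have : p12 = 0 by lra.
    move=> z3; move: d2'; rewrite z1 z2 z3; lra.
  have V : X2 - Y2 = 0.
    have z1 : (Y2 - X2) * (1 - p22) = 0 by nra.
    have z2 : p12 * (Y2 - X2) = 0 by nra.
    move/eqP: z1; rewrite mulf_eq0 => /orP[/eqP z1|/eqP z1]; first lra.
    move/eqP: z2; rewrite mulf_eq0 => /orP[/eqP z2|/eqP z2]; last lra.
    have : p21 = 0 by lra.
    move=> z3; move: d1'; rewrite z1 z2; lra.
  split; last lra.
  apply/matrixP => i j; rewrite (ord1 j).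
  have [->|->] : i = 0 \/ i = 1.
    by case: i => [[|[|k]] //= hk]; [left|right]; apply/val_inj.
  + rewrite -/X1 -/Y1; lra.
  + rewrite -/X2 -/Y2; lra.
Qed.
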